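(* Let $Z\subset\mathbb{S}_2$ be a finite nonempty set of points. Then the following are equivalent: (i) $Z\subset\widetilde{L_{12}}\cap(E_1\cup E_2)$; (ii) $\alpha(Z)=\alpha(2Z)=\alpha(3Z)=\alpha(4Z)=\alpha(5Z)=1$.
   Context: Let $P_1,P_2\in\mathbb{P}^2(\mathbb{C})$ be two general (distinct) points and $f\colon\mathbb{S}_2\to\mathbb{P}^2$ the blow-up at them, with exceptional curves $E_i=f^{-1}(P_i)$; let $H$ be the pullback of the class of a line and $\mathbb{L}_2=3H-E_1-E_2=-K_{\mathbb{S}_2}$. $L_{12}$ is the line through $P_1,P_2$ and $\widetilde{L_{12}}$ its proper transform in $\mathbb{S}_2$. For a finite set $Z\subset\mathbb{S}_2$ with ideal sheaf $\mathcal{I}_Z$ and a positive integer $m$, $\alpha(mZ)=\min\{d\ge 0:\ H^0(\mathbb{S}_2,d\mathbb{L}_2\otimes\mathcal{I}_Z^{(m)})\neq 0\}$, i.e. the least $d$ such that some effective divisor $D\in|d\mathbb{L}_2|$ has multiplicity at least $m$ at every point of $Z$. *)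

(* Defs.v *)
From HB Require Import structures.
From mathcomp Require Import all_boot all_order all_algebra.
From mathcomp Require Import Rstruct.
From mathcomp Require Import complex.
From mathcomp Require Import mpoly.
Set Implicit Arguments. Unset Strict Implicit. Unset Printing Implicit Defensive.
Import GRing.Theory Num.Theory.
Local Open Scope ring_scope.

Definition C : closedFieldType := (Rdefinitions.R)[i].

(* Homogeneous coordinates [x0:x1:x2] = [x:y:z] on P^2(C); variable 'X_0 = x,
   'X_1 = y, 'X_2 = z.  Coordinates are chosen so that (WLOG, by PGL_3)
   P1 = [1:0:0], P2 = [0:1:0]; hence L12 = {z = 0}. *)
Definition vec3 (x y z : C) : 'I_3 -> C := fun i => nth 0 [:: x; y; z] i.
Definition vec2 (s t : C) : 'I_2 -> C := fun i => nth 0 [:: s; t] i.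

Definition P1 : 'I_3 -> C := vec3 1 0 0.
Definition P2 : 'I_3 -> C := vec3 0 1 0.

(* For a homogeneous p in 3 variables this is the multiplicity of the plane
   curve {p = 0} at the projective point [v]; for p in 2 variables it is the
   usual multiplicity at the affine point v (char 0). *)
Definition mult_ge (n : nat) (p : {mpoly C[n]}) (v : 'I_n -> C) (m : nat) : Prop :=
  forall s : seq 'I_n, (size s < m)%N -> (foldr (fun i q => mderiv i q) p s).@[v] = 0.

(* Points of S_2 = Bl_{P1,P2} P^2:
   - [Base x y z] : the point [x:y:z] of P^2 \ {P1,P2};
   - [Exc1 a b]   : the point of E1 corresponding to the tangent direction
                    [a:b] at P1, in the local affine coordinates (y,z) (x=1);
   - [Exc2 a b]   : the point of E2 corresponding to the tangent direction
                    [a:b] at P2, in the local affine coordinates (x,z) (y=1). *)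
Inductive S2pt : Type :=
  | Base of C & C & C
  | Exc1 of C & C
  | Exc2 of C & C.

Definition S2wf (p : S2pt) : Prop :=
  match p with
  | Base x y z => ~ (x = 0 /\ y = 0 /\ z = 0) /\ ~ (y = 0 /\ z = 0) /\ ~ (x = 0 /\ z = 0)
  | Exc1 a b => ~ (a = 0 /\ b = 0)
  | Exc2 a b => ~ (a = 0 /\ b = 0)
  end.

(* Blow-up charts (local coordinates (s,t) = ('X_0,'X_1)), with the
   exceptional divisor given by s = 0. *)
(* near E1, direction [1:t] : y = s, z = s t *)
Definition chart1a : 3.-tuple {mpoly C[2]} := [tuple 1; 'X_0; 'X_0 * 'X_1].
(* near E1, direction [t:1] : y = s t, z = s *)
Definition chart1b : 3.-tuple {mpoly C[2]} := [tuple 1; 'X_0 * 'X_1; 'X_0].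
(* near E2, direction [1:t] : x = s, z = s t *)
Definition chart2a : 3.-tuple {mpoly C[2]} := [tuple 'X_0; 1; 'X_0 * 'X_1].
(* near E2, direction [t:1] : x = s t, z = s *)
Definition chart2b : 3.-tuple {mpoly C[2]} := [tuple 'X_0 * 'X_1; 1; 'X_0].

(* A nonzero section of d L_2 = d(3H - E1 - E2): a nonzero homogeneous form F
   of degree 3d with multiplicity >= d at P1 and at P2. *)
Definition is_section (d : nat) (F : {mpoly C[3]}) : Prop :=
  [/\ F != 0, F \is (3 * d)%N.-homog, mult_ge F P1 d & mult_ge F P2 d].

(* The effective divisor D = f^*{F=0} - d E1 - d E2 in |d L_2| has
   multiplicity >= m at the point p of S_2.  At a point of E_i the local
   equation of f^*{F=0} is F in the chart, which is s^d times the local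
   equation of D (s = local equation of E_i), so mult_p D >= m iff
   mult_p (F in the chart) >= m + d. *)
Definition mult_D_ge (d : nat) (F : {mpoly C[3]}) (p : S2pt) (m : nat) : Prop :=
  match p with
  | Base x y z => mult_ge F (vec3 x y z) m
  | Exc1 a b =>
      if a != 0 then mult_ge (comp_mpoly chart1a F) (vec2 0 (b / a)) (m + d)
      else mult_ge (comp_mpoly chart1b F) (vec2 0 (a / b)) (m + d)
  | Exc2 a b =>
      if a != 0 then mult_ge (comp_mpoly chart2a F) (vec2 0 (b / a)) (m + d)
      else mult_ge (comp_mpoly chart2b F) (vec2 0 (a / b)) (m + d)
  end.

Definition has_section (Z : seq S2pt) (m d : nat) : Prop :=
  exists F : {mpoly C[3]}, is_section d F /\ forall p, List.In p Z -> mult_D_ge d F p m.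

Definition alpha_is (Z : seq S2pt) (m d : nat) : Prop :=
  has_section Z m d /\ forall d', (d' < d)%N -> ~ has_section Z m d'.

(* p lies on the proper transform of L12 = {z = 0}; its points on E_i are the
   tangent direction of L12 at P_i, i.e. [1:0] in both local coordinate
   systems. *)
Definition on_L12t (p : S2pt) : Prop :=
  match p with
  | Base _ _ z => z = 0
  | Exc1 _ b => b = 0
  | Exc2 _ b => b = 0
  end.

Definition on_E12 (p : S2pt) : Prop :=
  match p with
  | Base _ _ _ => False
  | _ => True
  end.

(* Main.v *)
Require Import Defs.
From HB Require Import structures.
From mathcomp Require Import all_boot all_order all_algebra.
From mathcomp Require Import Rstruct complex mpoly.
From mathcomp Require Import ring zify.
Set Implicit Arguments. Unset Strict Implicit. Unset Printing Implicit Defensive.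
Import GRing.Theory Num.Theory.
Local Open Scope ring_scope.


Definition mono3 (a b c : nat) : 'X_{1..3} := [multinom nth 0%N [:: a; b; c] i | i < 3].
Definition mono2 (a b : nat) : 'X_{1..2} := [multinom nth 0%N [:: a; b] i | i < 2].
Definition o0 : 'I_2 := ord0.
Definition o1 : 'I_2 := ord_max.
Definition p0 : 'I_3 := ord0.
Definition p1 : 'I_3 := @Ordinal 3 1 isT.
Definition p2 : 'I_3 := ord_max.

Lemma mono2_sub i a b : (mono2 a b - U_(i))%MM =
  mono2 (if i == o0 then a.-1 else a) (if i == o1 then b.-1 else b).
Proof.
apply/mnmP => j; rewrite mnmBE !mnmE ?mnm1E.
by move: i j => -[[|[|i]] Hi] // -[[|[|j]] Hj] //=; rewrite ?subn0 ?subn1.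
Qed.

Lemma mono3_sub i a b k : (mono3 a b k - U_(i))%MM =
  mono3 (if i == p0 then a.-1 else a) (if i == p1 then b.-1 else b) (if i == p2 then k.-1 else k).
Proof.
apply/mnmP => j; rewrite mnmBE !mnmE ?mnm1E.
by move: i j => -[[|[|[|i]]] Hi] // -[[|[|[|j]]] Hj] //=; rewrite ?subn0 ?subn1.
Qed.

Lemma mdeg_mono3 a b k : mdeg (mono3 a b k) = (a + b + k)%N.
Proof. by rewrite mdegE !big_ord_recr big_ord0 /= !mnmE. Qed.

Lemma mono3_eq a b k a' b' k' :
  (mono3 a b k == mono3 a' b' k') = [&& a == a', b == b' & k == k'].
Proof.
apply/eqP/and3P => [E|[/eqP-> /eqP-> /eqP->]] //.
have e := fun j => congr1 (fun m : 'X_{1..3} => m j) E.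
by move: (e p0) (e p1) (e p2); rewrite !mnmE /= => -> -> ->.
Qed.

Lemma mono3E (m : 'X_{1..3}) : m = mono3 (m p0) (m p1) (m p2).
Proof. by apply/mnmP => -[[|[|[|j]]] Hj] //; rewrite mnmE /=; congr (m _); apply/val_inj. Qed.

Section Gen.
Variable R : numFieldType.
Fact XX_key : unit. Proof. by []. Qed.
Definition XX n (m : 'X_{1..n}) : {mpoly R[n]} := locked_with XX_key 'X_[m].
Lemma XXE n m : XX m = 'X_[m] :> {mpoly R[n]}. Proof. by rewrite /XX unlock. Qed.

Definition g2 (s t : R) : 'I_2 -> R := fun i => nth 0 [:: s; t] i.
Definition g3 (x y z : R) : 'I_3 -> R := fun i => nth 0 [:: x; y; z] i.

Definition mg n (p : {mpoly R[n]}) (v : 'I_n -> R) (m : nat) : Prop :=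
  forall s : seq 'I_n, (size s < m)%N -> (foldr (fun i q => mderiv i q) p s).@[v] = 0.

Definition lin2 (l : seq (R * nat * nat)) : {mpoly R[2]} :=
  \sum_(x <- l) x.1.1 *: XX (mono2 x.1.2 x.2).
Definition der2 (i : 'I_2) (x : R * nat * nat) : R * nat * nat :=
  let: (r, a, b) := x in
  (r * (nth 0%N [:: a; b] i)%:R, if i == o0 then a.-1 else a, if i == o1 then b.-1 else b).
Definition ev2 (v : 'I_2 -> R) (l : seq (R * nat * nat)) : R :=
  foldr (fun x acc => let: (r, a, b) := x in r * v o0 ^+ a * v o1 ^+ b + acc) 0 l.

Lemma lin2_der i l : mderiv i (lin2 l) = lin2 (map (der2 i) l).
Proof.
elim: l => [|[[r a] b] l IH]; rewrite /lin2 ?big_nil ?mderiv0 // big_cons /= mderivD.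
rewrite -/(lin2 l) IH /lin2 big_cons /=; congr (_ + _).
by rewrite mderivZ XXE mderivX -XXE scalerA mono2_sub mnmE.
Qed.

Lemma lin2_ev v l : (lin2 l).@[v] = ev2 v l.
Proof.
elim: l => [|[[r a] b] l IH]; rewrite /lin2 ?big_nil ?meval0 // big_cons /= mevalD.
rewrite -/(lin2 l) IH mevalZ XXE mevalX !big_ord_recr big_ord0 /= !mnmE /= mul1r mulrA.
have -> : widen_ord (leqnSn 1) ord_max = o0 by apply/val_inj.
by [].
Qed.

Lemma D2lin s l : foldr (fun i q => mderiv i q) (lin2 l) s =
  lin2 (foldr (fun i l => map (der2 i) l) l s).
Proof. by elim: s => //= i s ->; rewrite lin2_der. Qed.

Definition lin3 (l : seq (R * nat * nat * nat)) : {mpoly R[3]} :=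
  \sum_(x <- l) x.1.1.1 *: XX (mono3 x.1.1.2 x.1.2 x.2).
Definition der3 (i : 'I_3) (x : R * nat * nat * nat) : R * nat * nat * nat :=
  let: (r, a, b, k) := x in
  (r * (nth 0%N [:: a; b; k] i)%:R, if i == p0 then a.-1 else a,
   if i == p1 then b.-1 else b, if i == p2 then k.-1 else k).
Definition ev3 (v : 'I_3 -> R) (l : seq (R * nat * nat * nat)) : R :=
  foldr (fun x acc => let: (r, a, b, k) := x in
     r * v p0 ^+ a * v p1 ^+ b * v p2 ^+ k + acc) 0 l.

Lemma lin3_der i l : mderiv i (lin3 l) = lin3 (map (der3 i) l).
Proof.
elim: l => [|[[[r a] b] k] l IH]; rewrite /lin3 ?big_nil ?mderiv0 // big_cons /= mderivD.
rewrite -/(lin3 l) IH /lin3 big_cons /=; congr (_ + _).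
by rewrite mderivZ XXE mderivX -XXE scalerA mono3_sub mnmE.
Qed.

Lemma lin3_ev v l : (lin3 l).@[v] = ev3 v l.
Proof.
elim: l => [|[[[r a] b] k] l IH]; rewrite /lin3 ?big_nil ?meval0 // big_cons /= mevalD.
rewrite -/(lin3 l) IH mevalZ XXE mevalX !big_ord_recr big_ord0 /= !mnmE /= mul1r !mulrA.
have -> : widen_ord (leqnSn 2) (widen_ord (leqnSn 1) ord_max) = p0 by apply/val_inj.
have -> : widen_ord (leqnSn 2) ord_max = p1 by apply/val_inj.
by [].
Qed.

Lemma D3lin s l : foldr (fun i q => mderiv i q) (lin3 l) s =
  lin3 (foldr (fun i l => map (der3 i) l) l s).
Proof. by elim: s => //= i s ->; rewrite lin3_der. Qed.

End Gen.


Section Gen2.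
Variable R : numFieldType.

Definition Cl (c : nat -> nat -> nat -> R) : seq (R * nat * nat * nat) :=
  [:: (c 3 0 0, 3, 0, 0); (c 2 1 0, 2, 1, 0); (c 2 0 1, 2, 0, 1); (c 1 2 0, 1, 2, 0);
      (c 1 1 1, 1, 1, 1); (c 1 0 2, 1, 0, 2); (c 0 3 0, 0, 3, 0); (c 0 2 1, 0, 2, 1);
      (c 0 1 2, 0, 1, 2); (c 0 0 3, 0, 0, 3)]%N.

Lemma lin3_coef (l : seq (R * nat * nat * nat)) m : (lin3 l)@_m =
  foldr (fun x acc => x.1.1.1 * (mono3 x.1.1.2 x.1.2 x.2 == m)%:R + acc) 0 l.
Proof.
elim: l => [|x l IH]; rewrite /lin3 ?big_nil ?mcoeff0 // big_cons mcoeffD -/(lin3 l) IH.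
by rewrite mcoeffZ XXE mcoeffX.
Qed.

Lemma lin3_homog (l : seq (R * nat * nat * nat)) : all (fun x => x.1.1.2 + x.1.2 + x.2 == 3)%N l -> lin3 l \is 3.-homog.
Proof.
elim: l => [|x l IH]; rewrite /lin3 ?big_nil ?dhomog0 // big_cons /= => /andP[hx hl].
apply: dhomogD; last exact: IH.
apply: rpredZ; rewrite XXE dhomogX. by rewrite -[X in X == _]/(mdeg _) mdeg_mono3.
Qed.

Lemma Cl_coef (c : nat -> nat -> nat -> R) a b k : (a + b + k)%N = 3%N ->
  (lin3 (Cl c))@_(mono3 a b k) = c a b k.
Proof.
move=> E; rewrite lin3_coef.
have ha : (a <= 3)%N by lia.
have hb : (b <= 3)%N by lia.
have hk : (k <= 3)%N by lia.
time (case: a ha E => [|[|[|[|a]]]] // _ E; case: b hb E => [|[|[|[|b]]]] // _ E;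
  case: k hk E => [|[|[|[|k]]]] // _ E; try (exfalso; lia);
  rewrite /Cl; cbn [foldr fst snd]; rewrite !mono3_eq /=; ring).
Qed.

Lemma cubicE (F : {mpoly R[3]}) : F \is 3.-homog ->
  F = lin3 (Cl (fun i j k => F@_(mono3 i j k))).
Proof.
move=> hF; apply/mpolyP => m.
have [E|NE] := eqVneq (mdeg m) 3%N; last first.
  rewrite (dhomog_nemf_coeff hF NE) (dhomog_nemf_coeff _ NE) //.
  by apply: lin3_homog.
rewrite (mono3E m) mdeg_mono3 in E *.
by rewrite Cl_coef //; apply/eqP.
Qed.

Definition ch1a : 3.-tuple {mpoly R[2]} := [tuple 1; 'X_o0; 'X_o0 * 'X_o1].
Definition ch1b : 3.-tuple {mpoly R[2]} := [tuple 1; 'X_o0 * 'X_o1; 'X_o0].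
Definition ch2a : 3.-tuple {mpoly R[2]} := [tuple 'X_o0; 1; 'X_o0 * 'X_o1].
Definition ch2b : 3.-tuple {mpoly R[2]} := [tuple 'X_o0 * 'X_o1; 1; 'X_o0].

Lemma compXX (lq : 3.-tuple {mpoly R[2]}) i j k :
  comp_mpoly lq (@XX R 3 (mono3 i j k)) = tnth lq p0 ^+ i * tnth lq p1 ^+ j * tnth lq p2 ^+ k.
Proof.
rewrite XXE comp_mpolyX !big_ord_recr big_ord0 /=.
have -> : widen_ord (leqnSn 2) (widen_ord (leqnSn 1) ord_max) = p0 by apply/val_inj.
have -> : widen_ord (leqnSn 2) ord_max = p1 by apply/val_inj.
by rewrite !mnmE /= mul1r.
Qed.

Lemma XX2E a b : @XX R 2 (mono2 a b) = 'X_o0 ^+ a * 'X_o1 ^+ b :> {mpoly R[2]}.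
Proof.
rewrite XXE mpolyXE_id !big_ord_recr big_ord0 /=.
have -> : widen_ord (leqnSn 1) ord_max = o0 by apply/val_inj.
by rewrite !mnmE /= mul1r.
Qed.

Definition f1a (x : R * nat * nat * nat) := let: (r, i, j, k) := x in (r, j + k, k)%N.
Definition f1b (x : R * nat * nat * nat) := let: (r, i, j, k) := x in (r, j + k, j)%N.
Definition f2a (x : R * nat * nat * nat) := let: (r, i, j, k) := x in (r, i + k, k)%N.
Definition f2b (x : R * nat * nat * nat) := let: (r, i, j, k) := x in (r, i + k, i)%N.

Lemma comp_lin3 lq f (l : seq (R * nat * nat * nat)) :
  (forall r i j k, comp_mpoly lq (@XX R 3 (mono3 i j k)) =
      @XX R 2 (mono2 (f (r, i, j, k)).1.2 (f (r, i, j, k)).2) /\ (f (r, i, j, k)).1.1 = r) ->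
  comp_mpoly lq (lin3 l) = lin2 (map f l).
Proof.
move=> hf; elim: l => [|[[[r i] j] k] l IH]; rewrite /lin3 /lin2 ?big_nil ?comp_mpoly0 //.
rewrite !big_cons comp_mpolyD -/(lin3 l) IH comp_mpolyZ /=.
by case: (hf r i j k) => -> ->.
Qed.

Lemma comp1a l : comp_mpoly ch1a (lin3 l) = lin2 (map f1a l).
Proof.
apply: comp_lin3 => r i j k; split => //.
time (rewrite compXX XX2E /ch1a !(tnth_nth 0) /=).
by rewrite expr1n mul1r exprMn exprD mulrA.
Qed.
Lemma comp1b l : comp_mpoly ch1b (lin3 l) = lin2 (map f1b l).
Proof.
apply: comp_lin3 => r i j k; split => //.
rewrite compXX XX2E /ch1b !(tnth_nth 0) /=.
by rewrite expr1n mul1r exprMn exprD -!mulrA [X in _ * X]mulrC.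
Qed.
Lemma comp2a l : comp_mpoly ch2a (lin3 l) = lin2 (map f2a l).
Proof.
apply: comp_lin3 => r i j k; split => //.
rewrite compXX XX2E /ch2a !(tnth_nth 0) /=.
by rewrite expr1n mulr1 exprMn exprD mulrA.
Qed.
Lemma comp2b l : comp_mpoly ch2b (lin3 l) = lin2 (map f2b l).
Proof.
apply: comp_lin3 => r i j k; split => //.
rewrite compXX XX2E /ch2b !(tnth_nth 0) /=.
by rewrite expr1n mulr1 exprMn exprD -!mulrA [X in _ * X]mulrC.
Qed.
End Gen2.


Section Gen3.
Variable R : numFieldType.

Lemma cn (n : nat) (x : R) : (n.+1)%:R * x = 0 -> x = 0.
Proof. by move/eqP; rewrite mulf_eq0 pnatr_eq0 => /orP[]// /eqP. Qed.

Lemma mnz (t x : R) : t != 0 -> t * x = 0 -> x = 0.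
Proof. by move=> tn /eqP; rewrite mulf_eq0 (negbTE tn) => /eqP. Qed.

Lemma Cl0 (c : nat -> nat -> nat -> R) :
  c 3%N 0%N 0%N = 0 -> c 2%N 1%N 0%N = 0 -> c 2%N 0%N 1%N = 0 -> c 1%N 2%N 0%N = 0 -> c 1%N 1%N 1%N = 0 ->
  c 1%N 0%N 2%N = 0 -> c 0%N 3%N 0%N = 0 -> c 0%N 2%N 1%N = 0 -> c 0%N 1%N 2%N = 0 -> c 0%N 0%N 3%N = 0 ->
  lin3 (Cl c) = 0.
Proof.
move=> h1 h2 h3 h4 h5 h6 h7 h8 h9 h10; rewrite /lin3 /Cl !big_cons big_nil /=.
by rewrite h1 h2 h3 h4 h5 h6 h7 h8 h9 h10 !scale0r !addr0.
Qed.


Ltac vt H s := let h := fresh "h" in have h := H s isT;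
  rewrite ?D2lin ?D3lin ?lin2_ev ?lin3_ev /= ?/g2 ?/g3 /= in h; rewrite -h; ring.

Lemma key1a (c : nat -> nat -> nat -> R) t : c 0%N 3%N 0%N = 0 ->
  mg (lin2 (map (@f1a R) (Cl c))) (g2 0 t) 6 -> t = 0 \/ lin3 (Cl c) = 0.
Proof.
move=> h030 H.
have e300 : c 3%N 0%N 0%N = 0 by vt H (@nil 'I_2).
have e201 : c 2%N 0%N 1%N = 0 by vt H [:: o0; o1].
have e210 : c 2%N 1%N 0%N + c 2%N 0%N 1%N * t = 0 by vt H [:: o0].
have e102 : 4%:R * c 1%N 0%N 2%N = 0 by vt H [:: o0; o0; o1; o1].
have e111 : 2%:R * (c 1%N 1%N 1%N + 2%:R * c 1%N 0%N 2%N * t) = 0 by vt H [:: o0; o0; o1].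
have e120 : 2%:R * (c 1%N 2%N 0%N + c 1%N 1%N 1%N * t + c 1%N 0%N 2%N * t ^+ 2) = 0 by vt H [:: o0; o0].
have G0 : 6%:R * (c 0%N 3%N 0%N + c 0%N 2%N 1%N * t + c 0%N 1%N 2%N * t ^+ 2 + c 0%N 0%N 3%N * t ^+ 3) = 0
  by vt H [:: o0; o0; o0].
have G1 : 6%:R * (c 0%N 2%N 1%N + 2%:R * c 0%N 1%N 2%N * t + 3%:R * c 0%N 0%N 3%N * t ^+ 2) = 0
  by vt H [:: o0; o0; o0; o1].
have G2 : 12%:R * (c 0%N 1%N 2%N + 3%:R * c 0%N 0%N 3%N * t) = 0 by vt H [:: o0; o0; o0; o1; o1].
have f102 : c 1%N 0%N 2%N = 0 by apply: (@cn 3).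
have f111 : c 1%N 1%N 1%N = 0 by apply: (@cn 1); rewrite -e111 f102; ring.
have f120 : c 1%N 2%N 0%N = 0 by apply: (@cn 1); rewrite -e120 f102 f111; ring.
have f210 : c 2%N 1%N 0%N = 0 by rewrite -e210 e201; ring.
have [->|tn] := eqVneq t 0; [by left | right].
have h1 : c 0%N 2%N 1%N + c 0%N 1%N 2%N * t + c 0%N 0%N 3%N * t ^+ 2 = 0.
  by apply: (mnz tn); apply: (@cn 5); rewrite -G0 h030; ring.
have h2 : c 0%N 1%N 2%N + 2%:R * c 0%N 0%N 3%N * t = 0.
  apply: (mnz tn); apply: (@cn 5).
  transitivity (6%:R * (c 0%N 2%N 1%N + 2%:R * c 0%N 1%N 2%N * t + 3%:R * c 0%N 0%N 3%N * t ^+ 2)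
     - 6%:R * (c 0%N 2%N 1%N + c 0%N 1%N 2%N * t + c 0%N 0%N 3%N * t ^+ 2)); first by ring.
  by rewrite G1 h1 mulr0 subr0.
have f003 : c 0%N 0%N 3%N = 0.
  apply: (mnz tn); apply: (@cn 11).
  transitivity (12%:R * (c 0%N 1%N 2%N + 3%:R * c 0%N 0%N 3%N * t)
     - 12%:R * (c 0%N 1%N 2%N + 2%:R * c 0%N 0%N 3%N * t)); first by ring.
  by rewrite G2 h2 mulr0 subr0.
have f012 : c 0%N 1%N 2%N = 0 by apply: (@cn 11); rewrite -G2 f003; ring.
have f021 : c 0%N 2%N 1%N = 0 by rewrite -h1 f012 f003; ring.
by apply: Cl0.
Qed.


Lemma key2a (c : nat -> nat -> nat -> R) t : c 3%N 0%N 0%N = 0 ->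
  mg (lin2 (map (@f2a R) (Cl c))) (g2 0 t) 6 -> t = 0 \/ lin3 (Cl c) = 0.
Proof.
move=> h030 H.
have e300 : c 0%N 3%N 0%N = 0 by vt H (@nil 'I_2).
have e201 : c 0%N 2%N 1%N = 0 by vt H [:: o0; o1].
have e210 : c 1%N 2%N 0%N + c 0%N 2%N 1%N * t = 0 by vt H [:: o0].
have e102 : 4%:R * c 0%N 1%N 2%N = 0 by vt H [:: o0; o0; o1; o1].
have e111 : 2%:R * (c 1%N 1%N 1%N + 2%:R * c 0%N 1%N 2%N * t) = 0 by vt H [:: o0; o0; o1].
have e120 : 2%:R * (c 2%N 1%N 0%N + c 1%N 1%N 1%N * t + c 0%N 1%N 2%N * t ^+ 2) = 0 by vt H [:: o0; o0].
have G0 : 6%:R * (c 3%N 0%N 0%N + c 2%N 0%N 1%N * t + c 1%N 0%N 2%N * t ^+ 2 + c 0%N 0%N 3%N * t ^+ 3) = 0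
  by vt H [:: o0; o0; o0].
have G1 : 6%:R * (c 2%N 0%N 1%N + 2%:R * c 1%N 0%N 2%N * t + 3%:R * c 0%N 0%N 3%N * t ^+ 2) = 0
  by vt H [:: o0; o0; o0; o1].
have G2 : 12%:R * (c 1%N 0%N 2%N + 3%:R * c 0%N 0%N 3%N * t) = 0 by vt H [:: o0; o0; o0; o1; o1].
have f102 : c 0%N 1%N 2%N = 0 by apply: (@cn 3).
have f111 : c 1%N 1%N 1%N = 0 by apply: (@cn 1); rewrite -e111 f102; ring.
have f120 : c 2%N 1%N 0%N = 0 by apply: (@cn 1); rewrite -e120 f102 f111; ring.
have f210 : c 1%N 2%N 0%N = 0 by rewrite -e210 e201; ring.
have [->|tn] := eqVneq t 0; [by left | right].
have h1 : c 2%N 0%N 1%N + c 1%N 0%N 2%N * t + c 0%N 0%N 3%N * t ^+ 2 = 0.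
  by apply: (mnz tn); apply: (@cn 5); rewrite -G0 h030; ring.
have h2 : c 1%N 0%N 2%N + 2%:R * c 0%N 0%N 3%N * t = 0.
  apply: (mnz tn); apply: (@cn 5).
  transitivity (6%:R * (c 2%N 0%N 1%N + 2%:R * c 1%N 0%N 2%N * t + 3%:R * c 0%N 0%N 3%N * t ^+ 2)
     - 6%:R * (c 2%N 0%N 1%N + c 1%N 0%N 2%N * t + c 0%N 0%N 3%N * t ^+ 2)); first by ring.
  by rewrite G1 h1 mulr0 subr0.
have f003 : c 0%N 0%N 3%N = 0.
  apply: (mnz tn); apply: (@cn 11).
  transitivity (12%:R * (c 1%N 0%N 2%N + 3%:R * c 0%N 0%N 3%N * t)
     - 12%:R * (c 1%N 0%N 2%N + 2%:R * c 0%N 0%N 3%N * t)); first by ring.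
  by rewrite G2 h2 mulr0 subr0.
have f012 : c 1%N 0%N 2%N = 0 by apply: (@cn 11); rewrite -G2 f003; ring.
have f021 : c 2%N 0%N 1%N = 0 by rewrite -h1 f012 f003; ring.
by apply: Cl0.
Qed.

Lemma key1b (c : nat -> nat -> nat -> R) : c 0%N 3%N 0%N = 0 ->
  mg (lin2 (map (@f1b R) (Cl c))) (g2 0 0) 6 -> lin3 (Cl c) = 0.
Proof.
move=> hg H.
have f00 : c 3%N 0%N 0%N = 0 by vt H (@nil 'I_2).
have f10 : c 2%N 0%N 1%N = 0 by vt H [:: o0].
have f11 : c 2%N 1%N 0%N = 0 by vt H [:: o0; o1].
have f20 : c 1%N 0%N 2%N = 0 by apply: (@cn 1); vt H [:: o0; o0].
have f21 : c 1%N 1%N 1%N = 0 by apply: (@cn 1); vt H [:: o0; o0; o1].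
have f22 : c 1%N 2%N 0%N = 0 by apply: (@cn 3); vt H [:: o0; o0; o1; o1].
have f30 : c 0%N 0%N 3%N = 0 by apply: (@cn 5); vt H [:: o0; o0; o0].
have f31 : c 0%N 1%N 2%N = 0 by apply: (@cn 5); vt H [:: o0; o0; o0; o1].
have f32 : c 0%N 2%N 1%N = 0 by apply: (@cn 11); vt H [:: o0; o0; o0; o1; o1].
by apply: Cl0.
Qed.

Lemma key2b (c : nat -> nat -> nat -> R) : c 3%N 0%N 0%N = 0 ->
  mg (lin2 (map (@f2b R) (Cl c))) (g2 0 0) 6 -> lin3 (Cl c) = 0.
Proof.
move=> hg H.
have f00 : c 0%N 3%N 0%N = 0 by vt H (@nil 'I_2).
have f10 : c 0%N 2%N 1%N = 0 by vt H [:: o0].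
have f11 : c 1%N 2%N 0%N = 0 by vt H [:: o0; o1].
have f20 : c 0%N 1%N 2%N = 0 by apply: (@cn 1); vt H [:: o0; o0].
have f21 : c 1%N 1%N 1%N = 0 by apply: (@cn 1); vt H [:: o0; o0; o1].
have f22 : c 2%N 1%N 0%N = 0 by apply: (@cn 3); vt H [:: o0; o0; o1; o1].
have f30 : c 0%N 0%N 3%N = 0 by apply: (@cn 5); vt H [:: o0; o0; o0].
have f31 : c 1%N 0%N 2%N = 0 by apply: (@cn 5); vt H [:: o0; o0; o0; o1].
have f32 : c 2%N 0%N 1%N = 0 by apply: (@cn 11); vt H [:: o0; o0; o0; o1; o1].
by apply: Cl0.
Qed.

Lemma keyB (c : nat -> nat -> nat -> R) v :
  mg (lin3 (Cl c)) v 5 -> lin3 (Cl c) = 0.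
Proof.
move=> H.
have f300 : c 3%N 0%N 0%N = 0 by apply: (@cn 5); vt H [:: p0; p0; p0].
have f210 : c 2%N 1%N 0%N = 0 by apply: (@cn 1); vt H [:: p0; p0; p1].
have f201 : c 2%N 0%N 1%N = 0 by apply: (@cn 1); vt H [:: p0; p0; p2].
have f120 : c 1%N 2%N 0%N = 0 by apply: (@cn 1); vt H [:: p0; p1; p1].
have f111 : c 1%N 1%N 1%N = 0 by vt H [:: p0; p1; p2].
have f102 : c 1%N 0%N 2%N = 0 by apply: (@cn 1); vt H [:: p0; p2; p2].
have f030 : c 0%N 3%N 0%N = 0 by apply: (@cn 5); vt H [:: p1; p1; p1].
have f021 : c 0%N 2%N 1%N = 0 by apply: (@cn 1); vt H [:: p1; p1; p2].
have f012 : c 0%N 1%N 2%N = 0 by apply: (@cn 1); vt H [:: p1; p2; p2].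
have f003 : c 0%N 0%N 3%N = 0 by apply: (@cn 5); vt H [:: p2; p2; p2].
by apply: Cl0.
Qed.


Lemma mg_mono n (p : {mpoly R[n]}) v a b : mg p v a -> (b <= a)%N -> mg p v b.
Proof. by move=> H hb s hs; apply: H; apply: leq_trans hs hb. Qed.

Definition w : seq (R * nat * nat * nat) := [:: (1 : R, 0%N, 0%N, 3%N)].

Lemma w_nz : lin3 w != 0.
Proof.
apply/eqP => E; have := congr1 (mcoeff (mono3 0 0 3)) E.
rewrite lin3_coef mcoeff0 /= eqxx mulr1 addr0 => /eqP; by rewrite oner_eq0.
Qed.

Lemma w_hom : lin3 w \is 3.-homog.
Proof. exact: lin3_homog. Qed.

Lemma w_P1 : mg (lin3 w) (g3 1 0 0) 1.
Proof. by move=> [|//] _; rewrite lin3_ev /= /g3 /=; ring. Qed.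
Lemma w_P2 : mg (lin3 w) (g3 0 1 0) 1.
Proof. by move=> [|//] _; rewrite lin3_ev /= /g3 /=; ring. Qed.

Lemma zc (s : seq 'I_2) : exists (r : R) (a b : nat),
  foldr (fun i l => map (der2 i) l) [:: (1 : R, 3%N, 3%N)] s = [:: (r, a, b)] /\
  (6 <= a + b + size s)%N.
Proof.
elim: s => [|i s [r [a [b [E H]]]]]; first by exists 1, 3%N, 3%N.
rewrite /= E /=.
have [->|ne] := eqVneq i o0.
  by eexists; exists a.-1, b; split => //=; lia.
have -> : i = o1.
  by move: i ne => -[[|[|m]] Hi] ne; apply/val_inj => //=.
by eexists; exists a, b.-1; split => //=; lia.
Qed.

Lemma zcube : mg (lin2 [:: (1 : R, 3%N, 3%N)]) (g2 0 0) 6.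
Proof.
move=> s hs; rewrite D2lin lin2_ev.
have [r [a [b [E H]]]] := zc s; rewrite E /= /g2 /=; clear E.
case: a H => [|a] H; last by rewrite expr0n /= mulr0 mul0r add0r.
case: b H => [|b] H; last by rewrite [X in _ * X]expr0n /= mulr0 add0r.
exfalso; lia.
Qed.

Lemma homog0E n (F : {mpoly R[n]}) : F \is 0.-homog -> F = (F@_0)%:MP.
Proof.
move=> hF; apply/mpolyP => m; rewrite mcoeffC.
have [->|ne] := eqVneq m 0%MM; first by rewrite mulr1.
rewrite mulr0; apply: (dhomog_nemf_coeff hF).
by rewrite mdeg_eq0.
Qed.

Lemma const_nmg n (F : {mpoly R[n]}) v m : F != 0 -> F \is 0.-homog -> (0 < m)%N -> ~ mg F v m.
Proof.
move=> Fnz Fh m0 H; have := H [::] m0; rewrite /= (homog0E Fh) mevalC => E.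
by move: Fnz; rewrite (homog0E Fh) E mpolyC0 eqxx.
Qed.

Lemma const_nmg_c (F : {mpoly R[3]}) (lq : 3.-tuple {mpoly R[2]}) v m :
  F != 0 -> F \is 0.-homog -> (0 < m)%N -> ~ mg (comp_mpoly lq F) v m.
Proof.
move=> Fnz Fh m0 H; have := H [::] m0; rewrite /= (homog0E Fh) comp_mpolyC mevalC => E.
by move: Fnz; rewrite (homog0E Fh) E mpolyC0 eqxx.
Qed.

Lemma P1c (c : nat -> nat -> nat -> R) : mg (lin3 (Cl c)) (g3 1 0 0) 1 -> c 3%N 0%N 0%N = 0.
Proof. move=> H; vt H (@nil 'I_3). Qed.
Lemma P2c (c : nat -> nat -> nat -> R) : mg (lin3 (Cl c)) (g3 0 1 0) 1 -> c 0%N 3%N 0%N = 0.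
Proof. move=> H; vt H (@nil 'I_3). Qed.

End Gen3.


Lemma ch1aE : chart1a = @ch1a C. Proof. by []. Qed.
Lemma ch1bE : chart1b = @ch1b C. Proof. by []. Qed.
Lemma ch2aE : chart2a = @ch2a C. Proof. by []. Qed.
Lemma ch2bE : chart2b = @ch2b C. Proof. by []. Qed.
Lemma v2E (s t : C) : vec2 s t = g2 s t. Proof. by []. Qed.
Lemma v3E (x y z : C) : vec3 x y z = g3 x y z. Proof. by []. Qed.
Lemma P1E : P1 = g3 (1 : C) 0 0. Proof. by []. Qed.
Lemma P2E : P2 = g3 (0 : C) 1 0. Proof. by []. Qed.
Lemma mgE n (p : {mpoly C[n]}) v m : mult_ge p v m <-> mg p v m. Proof. by []. Qed.

Theorem theorem3 (Z : seq S2pt) :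
  Z <> [::] -> (forall p, List.In p Z -> S2wf p) ->
  ((forall p, List.In p Z -> on_L12t p /\ on_E12 p) <->
   (forall m : nat, (1 <= m <= 5)%N -> alpha_is Z m 1)).
Proof.
move=> Zne wf; split.
- move=> hZ m /andP[m1 m5]; split.
  + exists (lin3 (@w C)); split.
      by split; [exact: w_nz | exact: w_hom | exact: w_P1 | exact: w_P2].
    move=> p hp; have [hL hE] := hZ p hp; have wp := wf p hp.
    case: p hp hL hE wp => [x y z|a b|a b] hp //= -> _ wp.
      have anz : a != 0 by apply/eqP => a0; apply: wp.
      rewrite anz mul0r ch1aE v2E comp1a.
      apply: (@mg_mono C 2 _ _ 6%N); [exact: (@zcube C) | lia].
    have anz : a != 0 by apply/eqP => a0; apply: wp.
    rewrite anz mul0r ch2aE v2E comp2a.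
    apply: (@mg_mono C 2 _ _ 6%N); [exact: (@zcube C) | lia].
  + move=> d' hd' [F [[Fnz Fh _ _] HZ]].
    have d0 : d' = 0%N by lia.
    subst d'.
    clear hZ; case: Z Zne HZ wf => [//|p Z'] _ HZ _.
    have m0 : (0 < m + 0)%N by lia.
    have := HZ p (or_introl erefl); clear HZ.
    case: p => [x y z|a b|a b] /=.
    * exact: (const_nmg Fnz Fh m1).
    * by case: ifP => _ H; [exact: (const_nmg_c Fnz Fh m0 H) | exact: (const_nmg_c Fnz Fh m0 H)].
    * by case: ifP => _ H; [exact: (const_nmg_c Fnz Fh m0 H) | exact: (const_nmg_c Fnz Fh m0 H)].
- move=> H p hp.
  have [[F [[Fnz Fh FP1 FP2] HZ]] _] := H 5%N isT.
  move: (cubicE Fh) => EF.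
  move: (fun i j k => F@_(mono3 i j k)) EF => c EF.
  have cnz : lin3 (Cl c) != 0 by rewrite -EF.
  have h300 : c 3%N 0%N 0%N = 0 by apply: P1c; move: FP1; rewrite EF.
  have h030 : c 0%N 3%N 0%N = 0 by apply: P2c; move: FP2; rewrite EF.
  have := HZ p hp; have wp := wf p hp; rewrite EF.
  case: p hp wp => [x y z|a b|a b] hp wp /=.
  + move=> Hb; exfalso; move/eqP: cnz; apply; exact: (keyB Hb).
  + move=> H1; case: (boolP (a != 0)) => ha; rewrite ?ha ?(negbTE ha) in H1.
      rewrite ch1aE v2E comp1a in H1.
      have [t0|c0] := key1a h030 H1; last by rewrite c0 eqxx in cnz.
      split => //; move/eqP: t0; rewrite mulf_eq0 invr_eq0 (negbTE ha) orbF.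
      by move/eqP.
    move/negPn/eqP: ha => a0; subst a.
    rewrite mul0r ch1bE v2E comp1b in H1.
    by have := key1b h030 H1; move=> c0; rewrite c0 eqxx in cnz.
  + move=> H1; case: (boolP (a != 0)) => ha; rewrite ?ha ?(negbTE ha) in H1.
      rewrite ch2aE v2E comp2a in H1.
      have [t0|c0] := key2a h300 H1; last by rewrite c0 eqxx in cnz.
      split => //; move/eqP: t0; rewrite mulf_eq0 invr_eq0 (negbTE ha) orbF.
      by move/eqP.
    move/negPn/eqP: ha => a0; subst a.
    rewrite mul0r ch2bE v2E comp2b in H1.
    by have := key2b h300 H1; move=> c0; rewrite c0 eqxx in cnz.
Qed.
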